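(* Let $n\ge 2$, let $(A,+)$ be a non-trivial finite Abelian group and let $w$ be an $A$-arc-labelling of $\overleftrightarrow{K}_n$. Then there exists an $A$-arc-labelling $w'$ of $\overleftrightarrow{K}_n$ which is switching-equivalent to $w$ such that at least one of the following holds: (1) there exist a vertex set $V\subseteq V(\overleftrightarrow{K}_n)$ with $|V|\ge n-4|A|$ and a proper subgroup $B<A$ such that $w'(x,y)\in B$ for every arc $(x,y)$ of the induced subdigraph $\overleftrightarrow{K}_n[V]$; (2) there exist vertices $u,v\in V(\overleftrightarrow{K}_n)$ such that $w'$ is $A$-complete at $u,v$.
   Context: $\overleftrightarrow{K}_n$ denotes the complete digraph on $n$ vertices whose arc set consists of all ordered pairs of distinct vertices. An $A$-arc-labelling of $\overleftrightarrow{K}_n$ is a function $w$ from its arc set to $A$. The labelling $w$ is $A$-complete at vertices $u,v$ if for every $a\in A$ there is a directed path $P_a$ from $u$ to $v$ with $\sum_{(x,y)\in P_a} w(x,y)=a$. For a vertex $v$ and $c\in A$, the switching by $c$ at $v$ transforms $w$ into $w'$ with $w'(x,y)=w(x,y)$ if $x,y\ne v$, $w'(x,y)=w(x,y)+c$ if $x=v$, and $w'(x,y)=w(x,y)-c$ if $y=v$. Two $A$-arc-labellings are switching-equivalent if one can be obtained from the other by a finite sequence of switchings. *)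

(* Defs.v *)
From HB Require Import structures.
From mathcomp Require Import all_boot all_order all_algebra.
Set Implicit Arguments. Unset Strict Implicit. Unset Printing Implicit Defensive.
Import GRing.Theory.
Local Open Scope ring_scope.

(* Vertices of the complete digraph K_n are 'I_n; arcs are pairs (x,y), x != y.
   An A-arc-labelling is a function w : 'I_n -> 'I_n -> A; its values on the
   diagonal (x,x) are not arcs and never used. *)
Definition labelling (A : zmodType) (n : nat) := 'I_n -> 'I_n -> A.

Definition switch (A : zmodType) (n : nat) (w : labelling A n) (v : 'I_n) (c : A)
  : labelling A n :=
  fun x y => w x y + (if x == v then c else 0) - (if y == v then c else 0).

Inductive switch_equiv (A : zmodType) (n : nat) (w : labelling A n)
  : labelling A n -> Prop :=
| sw_refl : switch_equiv w w
| sw_step : forall w1 v c, switch_equiv w w1 -> switch_equiv w (switch w1 v c).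

Definition walk_weight (A : zmodType) (n : nat) (w : labelling A n)
  (u : 'I_n) (p : seq 'I_n) : A :=
  \sum_(e <- zip (u :: p) p) w e.1 e.2.

(* u :: p is a directed path from u to v in K_n: vertices pairwise distinct
   (hence all consecutive pairs are arcs) and ending at v. *)
Definition dipath (n : nat) (u v : 'I_n) (p : seq 'I_n) : bool :=
  uniq (u :: p) && (last u p == v).

Definition A_complete (A : finZmodType) (n : nat) (w : labelling A n) (u v : 'I_n) :=
  forall a : A, exists p : seq 'I_n, dipath u v p /\ walk_weight w u p = a.

Definition is_subgroup (A : finZmodType) (B : {set A}) : Prop :=
  0 \in B /\ (forall x y, x \in B -> y \in B -> x - y \in B).

(* Main.v *)
Require Import Defs.
From HB Require Import structures.
From mathcomp Require Import all_boot all_order all_algebra.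
From mathcomp Require Import zify.
From Stdlib Require Import FunctionalExtensionality Classical.
Import GRing.Theory.
Local Open Scope ring_scope.

Lemma alg1 (A : zmodType) (P Q R T : A) : T + R - Q = (P + R + T) - (P + Q).
Proof. by rewrite (addrC P R) (addrAC R P T) addrKA (addrC T R). Qed.

Lemma alg2 (A : zmodType) (a k X Y : A) : a + (k + X) - (k + Y) = a + X - Y + k - k.
Proof. by rewrite addrK (addrCA a k X) [k + (a + X)]addrC addrKA. Qed.
Lemma alg3 (A : zmodType) (a k X Y : A) : a + (k + X) - Y = a + X - Y + k.
Proof. by rewrite (addrCA a k X) [k + (a + X)]addrC addrAC. Qed.
Lemma alg4 (A : zmodType) (a k X Y : A) : a + X - (k + Y) = a + X - Y - k.
Proof. by rewrite opprD addrA addrAC. Qed.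

Lemma walk_weight_cat (A : zmodType) n (w : labelling A n) u p q :
  walk_weight w u (p ++ q) = walk_weight w u p + walk_weight w (last u p) q.
Proof.
elim: p u => [|x p IH] u /=; first by rewrite /walk_weight /= big_nil add0r.
rewrite /walk_weight /= !big_cons -addrA; congr (_ + _); exact: IH.
Qed.

Lemma switch_all (A : zmodType) n (w : labelling A n) (c : 'I_n -> A) :
  switch_equiv w (fun x y => w x y + c x - c y).
Proof.
have H : forall s : seq 'I_n, switch_equiv w (fun x y => w x y
   + \sum_(z <- s | z == x) c z - \sum_(z <- s | z == y) c z).
  elim=> [|z s IH].
    have -> : (fun x y => w x y + \sum_(z <- [::] | z == x) c z
               - \sum_(z <- [::] | z == y) c z) = w.
      apply: functional_extensionality => x; apply: functional_extensionality => y.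
      by rewrite !big_nil addr0 subr0.
    exact: sw_refl.
  have -> : (fun x y => w x y + \sum_(z0 <- z :: s | z0 == x) c z0
               - \sum_(z0 <- z :: s | z0 == y) c z0) =
    switch (fun x y => w x y + \sum_(z <- s | z == x) c z - \sum_(z <- s | z == y) c z) z (c z).
    apply: functional_extensionality => x; apply: functional_extensionality => y.
    rewrite /switch !big_cons [z == x]eq_sym [z == y]eq_sym.
    case: (x == z); case: (y == z); rewrite ?addr0 ?subr0 ?add0r //.
    - exact: alg2.
    - exact: alg3.
    - exact: alg4.
  exact: sw_step.
have -> : (fun x y => w x y + c x - c y) = (fun x y => w x y
   + \sum_(z <- index_enum 'I_n | z == x) c z - \sum_(z <- index_enum 'I_n | z == y) c z).
  apply: functional_extensionality => x; apply: functional_extensionality => y.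
  by rewrite !big_pred1_eq.
exact: H.
Qed.

Definition goal (A : finZmodType) (n : nat) (w : labelling A n) :=
  exists w' : labelling A n, switch_equiv w w' /\
    ((exists (V : {set 'I_n}) (B : {set A}),
        (n <= #|V| + 4 * #|A|)%N /\ is_subgroup B /\ B != [set: A] /\
        (forall x y, x \in V -> y \in V -> x != y -> w' x y \in B))
     \/ (exists u v : 'I_n, A_complete w' u v)).

Definition inv (A : finZmodType) n (w : labelling A n) (u v : 'I_n)
  (U : {set 'I_n}) (S : {set A}) :=
  [/\ u \in U, v \in U, (#|U| + 2 <= 3 * #|S|)%N &
   forall a, a \in S -> exists p, [/\ dipath u v p, all (fun x => x \in U) p
                                   & walk_weight w u p = a]].
Arguments inv {A n}.
Arguments goal {A n}.

Lemma notin_path n (U : {set 'I_n}) (u : 'I_n) p z :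
  u \in U -> all (fun x => x \in U) p -> z \notin U -> z \notin u :: p.
Proof.
move=> uU /allP ap zU; rewrite in_cons; apply/norP; split.
  by apply/eqP => e; move: zU; rewrite e uU.
by apply/negP => /ap zp; move: zU; rewrite zp.
Qed.

Lemma card_grow (A : finType) (X Y : {set A}) y :
  y \in Y -> y \notin X -> (#|X| < #|X :|: Y|)%N.
Proof.
move=> yY yX; apply: (@leq_trans #|y |: X|).
  by rewrite cardsU1 yX.
apply: subset_leq_card; apply/subsetP => x; rewrite !inE => /orP [/eqP -> | ->].
  by rewrite yY orbT.
by [].
Qed.

Lemma cardsU1_le (T : finType) (a : T) (X : {set T}) : (#|a |: X| <= #|X| + 1)%N.
Proof. rewrite cardsU1 addnC leq_add2l; by case: (_ \notin _). Qed.

Arguments cardsU1_le {T}.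
Arguments card_grow {A X Y y}.
Arguments notin_path {n U u p z}.

Lemma step (A : finZmodType) n (w : labelling A n) u v U S :
  inv w u v U S -> goal w \/
  exists u' v' U' S', inv w u' v' U' S' /\ (#|S| < #|S'|)%N.
Proof.
move=> [uU vU cardU Hp].
case: (boolP (S == setT)) => [/eqP ST | SnT].
  left; exists w; split; first exact: sw_refl.
  right; exists u, v => a.
  have : a \in S by rewrite ST inE.
  by move/Hp => [p [dp _ wp]]; exists p.
pose t1 a c := w v a + w a c.
pose t2 a b c := w v a + w a b + w b c.
destruct (classic (exists a b c s, [/\ a \notin U, b \notin U, c \notin U,
   [&& a != b, b != c & a != c] & s \in S] /\
   ((s + t2 a b c \notin [set x + t1 a c | x in S]) \/
    (s + t1 a c \notin [set x + t2 a b c | x in S])))) as [Hex | Hno].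
- right; case: Hex => a [b [c [s [[aU bU cU /and3P[ab bc ac] sS] Hgrow]]]].
  set S' := [set x + t1 a c | x in S] :|: [set x + t2 a b c | x in S].
  have HS : (#|S| < #|S'|)%N.
    case: Hgrow => H.
      rewrite -(card_imset S (addIr (t1 a c))).
      apply: (card_grow _ H); exact: imset_f.
    rewrite /S' setUC -(card_imset S (addIr (t2 a b c))).
    apply: (card_grow _ H); exact: imset_f.
  exists u, c, (a |: (b |: (c |: U))), S'; split; last exact: HS; split.
  + by rewrite !inE uU !orbT.
  + by rewrite !inE eqxx !orbT.
  + have : (#|a |: (b |: (c |: U))| <= #|U| + 3)%N.
      have := cardsU1_le a (b |: (c |: U)).
      have := cardsU1_le b (c |: U); have := cardsU1_le c U.
      move: #|a |: _| #|b |: _| #|c |: _| #|U| => k1 k2 k3 k4. lia.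
    move: HS cardU; move: #|S'| #|S| #|a |: _| #|U| => k1 k2 k3 k4. lia.
  + have nap := notin_path uU.
    move=> x; rewrite inE => /orP [] /imsetP [y yS ->]; have [p [dp ap wp]] := Hp y yS;
      move/andP: dp => [up /eqP lp].
    * exists (p ++ [:: a; c]); split.
      -- rewrite /dipath -cat_cons cat_uniq up last_cat /=.
         rewrite (negbTE (nap _ _ ap aU)) (negbTE (nap _ _ ap cU)) /= !inE.
         by rewrite ac eqxx.
      -- rewrite all_cat /= !inE !eqxx !orbT /= andbT.
         by apply/allP => z /(allP ap) zU; rewrite !inE zU !orbT.
      -- rewrite walk_weight_cat wp lp /walk_weight /= !big_cons big_nil addr0.
         by [].
    * exists (p ++ [:: a; b; c]); split.
      -- rewrite /dipath -cat_cons cat_uniq up last_cat /=.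
         rewrite (negbTE (nap _ _ ap aU)) (negbTE (nap _ _ ap bU)) (negbTE (nap _ _ ap cU)) /= !inE.
         by rewrite (negbTE ab) (negbTE ac) bc eqxx.
      -- rewrite all_cat /= !inE !eqxx !orbT /= andbT.
         by apply/allP => z /(allP ap) zU; rewrite !inE zU !orbT.
      -- rewrite walk_weight_cat wp lp /walk_weight /= !big_cons big_nil addr0.
         by rewrite /t2 !addrA.
- left.
  pose B := [set g | [forall x in S, (x + g \in S) && (x - g \in S)]].
  pose W := ~: U.
  have [r Hr] : exists r, (W != set0) ==> (r \in W).
    case: (set0Pn W) => [[r rW]|_]; first by exists r; rewrite rW implybT.
    by exists u.
  exists (fun x y => w x y + w r x - w r y); split; first exact: switch_all.
  left; exists (W :\ r), B; split; last split; last split.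
  + have h1 := cardsC U. rewrite card_ord in h1.
    have h2 := cardsD1 r W.
    have h3 : (#|S| <= #|A|)%N by exact: max_card.
    rewrite -/W in h1. move: h1 h2 h3 cardU.
    move: #|W :\ r| #|W| #|U| #|S| #|A| (r \in W) => k1 k2 k3 k4 k5 [] /=; lia.
  + split.
      rewrite inE; apply/forall_inP => x xS; by rewrite addr0 subr0 xS.
    move=> x y; rewrite !inE => /forall_inP xB /forall_inP yB.
    apply/forall_inP => s sS.
    have /andP [s1 s2] := yB s sS.
    have /andP [s3 s4] := xB s sS.
    have /andP [s5 _] := xB _ s2.
    have /andP [_ s6] := xB _ s1.
    apply/andP; split.
      by rewrite addrA addrAC.
    have /andP [s7 _] := yB _ s4.
    by rewrite opprB addrA addrAC.
  + apply/negP => /eqP BT.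
    have : (0 < #|S|)%N by move: cardU; move: #|U| #|S| => k1 k2; lia.
    rewrite card_gt0 => /set0Pn [s0 s0S].
    move/negP: SnT; apply; apply/eqP/setP => g; rewrite inE.
    have : g - s0 \in B by rewrite BT inE.
    rewrite inE => /forall_inP /(_ s0 s0S) /andP [+ _].
    by rewrite addrC subrK.
  + move=> x y xV yV xy.
    have rW : r \in W.
      move/implyP: Hr; apply; apply/set0Pn; exists x; by move: xV; rewrite inE => /andP[].
    move: xV yV rW; rewrite /W !inE => /andP [xr xU] /andP [yr yU] rU.
    have Hall : forall s, s \in S ->
        (s + t2 r x y \in [set z + t1 r y | z in S]) /\
        (s + t1 r y \in [set z + t2 r x y | z in S]).
      move=> s sS; split; apply: NNPP => hn; apply: Hno;
        exists r, x, y, s; split; (try by rewrite rU xU yU eq_sym xr xy eq_sym yr);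
        [left | right]; exact/negP.
    apply/forall_inP => s sS; have [h1 h2] := Hall s sS.
    rewrite (_ : w x y + w r x - w r y = t2 r x y - t1 r y); last exact: alg1.
    move/imsetP: h1 => [s1 s1S e1]; move/imsetP: h2 => [s2 s2S e2].
    rewrite addrA e1 addrK s1S /=.
    by rewrite opprB addrA e2 addrK.
Qed.

Arguments step {A n w u v U S}.

Lemma main_ind (A : finZmodType) n (w : labelling A n) m :
  forall u v U S, inv w u v U S -> (#|A| - #|S| <= m)%N -> goal w.
Proof.
elim: m => [|m IH] u v U S Hi Hm;
  case: (step Hi) => [//|[u' [v' [U' [S' [Hi' HS]]]]]].
  have := max_card (mem S'); move: Hm HS; move: #|A| #|S| #|S'| => k1 k2 k3; lia.
apply: (IH _ _ _ _ Hi'); move: Hm HS; move: #|A| #|S| #|S'| => k1 k2 k3; lia.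
Qed.

Theorem lemma5 (A : finZmodType) (n : nat) (w : labelling A n) :
  (2 <= n)%N -> (1 < #|A|)%N ->
  exists w' : labelling A n, switch_equiv w w' /\
    ((exists (V : {set 'I_n}) (B : {set A}),
        (n <= #|V| + 4 * #|A|)%N /\ is_subgroup B /\ B != [set: A] /\
        (forall x y, x \in V -> y \in V -> x != y -> w' x y \in B))
     \/ (exists u v : 'I_n, A_complete w' u v)).
Proof.
move=> Hn _.
pose z : 'I_n := Ordinal (ltnW Hn).
apply: (@main_ind A n w #|A| z z [set z] [set 0]); last exact: leq_subr.
split.
- exact: set11.
- exact: set11.
- by rewrite !cards1.
- move=> a; rewrite inE => /eqP ->; exists [::].
  by split; rewrite /dipath /walk_weight /= ?big_nil ?eqxx.
Qed.
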